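(* Let $(S,+)$ be an infinite left weakly cancellative semigroup with no idempotent element, and let $\langle x_n\rangle_{n=1}^\infty$ be a sequence in $S$. Then there exists a sum subsystem $\langle y_n\rangle_{n=1}^\infty$ of $\langle x_n\rangle_{n=1}^\infty$ which satisfies finiteness of finite sums.
   Context: $S$ is left weakly cancellative if for all $a,b\in S$ the set $\{x\in S: a+x=b\}$ is finite; $e$ is idempotent if $e+e=e$. $\mathcal{P}_f(\mathbb{N})$ denotes the set of nonempty finite subsets of $\mathbb{N}=\{1,2,\dots\}$, and $\sum_{n\in H}x_n$ is the sum in increasing order of indices. A sequence $\langle y_n\rangle_{n=1}^\infty$ is a sum subsystem of $\langle x_n\rangle_{n=1}^\infty$ if there is a sequence $\langle H_n\rangle_{n=1}^\infty$ in $\mathcal{P}_f(\mathbb{N})$ with $\max H_n<\min H_{n+1}$ and $y_n=\sum_{t\in H_n}x_t$ for all $n$. A sequence $\langle y_n\rangle_{n=1}^\infty$ satisfies finiteness of finite sums if for all $H_1,H_2\in\mathcal{P}_f(\mathbb{N})$ with $\max H_1\neq\max H_2$ one has $\sum_{n\in H_1}y_n\neq\sum_{n\in H_2}y_n$. *)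

(* Defs.v *)
(* Semigroups are given as a carrier type with an associative
   binary operation [op] (written + in the paper, not assumed commutative). *)
From Stdlib Require Import List Arith Sorting.Sorted.
Import ListNotations.

Definition finite_pred {T : Type} (P : T -> Prop) : Prop :=
  exists l : list T, forall s, P s -> In s l.

Definition infinite_type (T : Type) : Prop :=
  ~ finite_pred (fun _ : T => True).

Definition associative {T : Type} (op : T -> T -> T) : Prop :=
  forall a b c, op a (op b c) = op (op a b) c.

Definition left_weakly_cancellative {T : Type} (op : T -> T -> T) : Prop :=
  forall a b : T, finite_pred (fun x => op a x = b).

Definition idempotent {T : Type} (op : T -> T -> T) (e : T) : Prop :=
  op e e = e.

(* Nonempty finite subsets of the index set are represented by their
   strictly increasing (nonempty) list of elements. *)
Definition Pf (H : list nat) : Prop := H <> [] /\ Sorted lt H.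

Definition minP (H : list nat) : nat := hd 0 H.
Definition maxP (H : list nat) : nat := last H 0.

(* sum_{n in H} x_n, in increasing order of indices (for H nonempty;
   the value on [] is irrelevant). *)
Definition fsum {T : Type} (op : T -> T -> T) (x : nat -> T) (H : list nat) : T :=
  match H with
  | [] => x 0
  | h :: t => fold_left (fun acc n => op acc (x n)) t (x h)
  end.

Definition sum_subsystem {T : Type} (op : T -> T -> T) (y x : nat -> T) : Prop :=
  exists Hs : nat -> list nat,
    (forall n, Pf (Hs n)) /\
    (forall n, maxP (Hs n) < minP (Hs (Datatypes.S n))) /\
    (forall n, y n = fsum op x (Hs n)).

Definition finiteness_of_finite_sums {T : Type} (op : T -> T -> T) (y : nat -> T) : Prop :=
  forall H1 H2, Pf H1 -> Pf H2 -> maxP H1 <> maxP H2 ->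
    fsum op y H1 <> fsum op y H2.

(* Main.v *)
Require Import Defs.
From Stdlib Require Import List Arith Lia Sorting.Sorted Classical ClassicalEpsilon.
Import ListNotations.

Lemma fold_assoc {T : Type} (op : T -> T -> T) (Ha : associative op) (x : nat -> T) :
  forall t a b, fold_left (fun acc n => op acc (x n)) t (op a b)
              = op a (fold_left (fun acc n => op acc (x n)) t b).
Proof.
  induction t as [|h t IH]; intros a b; simpl; auto.
  rewrite <- Ha. apply IH.
Qed.

Lemma fsum_app {T : Type} (op : T -> T -> T) (Ha : associative op) (x : nat -> T) :
  forall A B, A <> [] -> B <> [] -> fsum op x (A ++ B) = op (fsum op x A) (fsum op x B).
Proof.
  intros [|h t] [|h' t'] HA HB; try congruence.
  simpl. rewrite fold_left_app. simpl. apply fold_assoc; auto.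
Qed.

Lemma pigeon {T : Type} (f : nat -> T) (L : list T) :
  (forall n, In (f n) L) -> exists i j, i < j /\ f i = f j.
Proof.
  intros HL.
  apply NNPP; intro Hn.
  assert (Hnd : NoDup (map f (seq 0 (Datatypes.S (length L))))).
  { apply NoDup_map_NoDup_ForallPairs; [|apply seq_NoDup].
    intros a b _ _ Hab.
    destruct (Nat.lt_trichotomy a b) as [H|[H|H]]; auto.
    - exfalso; apply Hn; eauto.
    - exfalso; apply Hn; eauto. }
  assert (Hinc : incl (map f (seq 0 (Datatypes.S (length L)))) L).
  { intros z Hz. apply in_map_iff in Hz. destruct Hz as [n [<- _]]. auto. }
  pose proof (NoDup_incl_length Hnd Hinc) as Hle.
  rewrite length_map, length_seq in Hle. lia.
Qed.

Lemma finite_or {T : Type} (P Q : T -> Prop) :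
  finite_pred P -> finite_pred Q -> finite_pred (fun z => P z \/ Q z).
Proof.
  intros [l1 H1] [l2 H2]. exists (l1 ++ l2). intros s [Hs|Hs]; apply in_or_app; auto.
Qed.

Lemma finite_ex {T A : Type} (P : A -> T -> Prop) (l : list A) :
  (forall a, finite_pred (P a)) -> finite_pred (fun z => exists a, In a l /\ P a z).
Proof.
  intros HP. induction l as [|a l IH].
  - exists []. intros s [a [[] _]].
  - destruct (finite_or _ _ (HP a) IH) as [L HL]. exists L.
    intros s [b [[<-|Hb] Hs]]; apply HL; eauto.
Qed.

Definition good {T : Type} (op : T -> T -> T) (V : list T) (z : T) : Prop :=
  ~ In z V /\ forall a b, In a V -> In b V -> op a z <> b.

Fixpoint pw {T : Type} (op : T -> T -> T) (w : T) (n : nat) : T :=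
  match n with 0 => w | Datatypes.S n' => op (pw op w n') w end.

Lemma pw_add {T : Type} (op : T -> T -> T) (Ha : associative op) w :
  forall b a, op (pw op w a) (pw op w b) = pw op w (a + b + 1).
Proof.
  induction b; intros a; simpl.
  - rewrite Nat.add_0_r, Nat.add_1_r; reflexivity.
  - rewrite Ha, IHb. replace (a + Datatypes.S b + 1) with (Datatypes.S (a + b + 1)) by lia. reflexivity.
Qed.

Lemma pw_shift {T : Type} (op : T -> T -> T) w a b :
  pw op w a = pw op w b -> forall t, pw op w (a + t) = pw op w (b + t).
Proof.
  intros H t; induction t.
  - rewrite !Nat.add_0_r; auto.
  - rewrite !Nat.add_succ_r; simpl; rewrite IHt; auto.
Qed.

Lemma no_idem_cyclic {T : Type} (op : T -> T -> T) (Ha : associative op)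
  (Hnoid : forall e, ~ idempotent op e) (w : T) (L : list T) :
  ~ (forall n, In (pw op w n) L).
Proof.
  intros HL. destruct (pigeon _ _ HL) as [a [b [Hab Heq]]].
  set (d := b - a).
  assert (Hper : forall c, a <= c -> pw op w (c + d) = pw op w c).
  { intros c Hc. replace c with (a + (c - a)) by lia.
    replace (a + (c - a) + d) with (b + (c - a)) by (unfold d; lia).
    symmetry; apply pw_shift; auto. }
  assert (Hq : forall q c, a <= c -> pw op w (c + q * d) = pw op w c).
  { induction q; intros c Hc; simpl.
    - f_equal; lia.
    - replace (c + (d + q * d)) with ((c + q * d) + d) by lia.
      rewrite Hper by lia. auto. }
  set (n := (a + 1) * d - 1).
  apply (Hnoid (pw op w n)). unfold idempotent.
  rewrite pw_add by auto.
  replace (n + n + 1) with (n + (a + 1) * d) by (unfold n, d; nia).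
  apply Hq. unfold n, d; nia.
Qed.

Definition blk {T : Type} (op : T -> T -> T) (x : nat -> T) m d := fsum op x (seq m (Datatypes.S d)).

Lemma seq_split m i j : i < j ->
  seq m (Datatypes.S j) = seq m (Datatypes.S i) ++ seq (m + Datatypes.S i) (j - i).
Proof.
  intros H. replace (Datatypes.S j) with (Datatypes.S i + (j - i)) by lia.
  apply seq_app.
Qed.

Lemma avoid {T : Type} (op : T -> T -> T) (Ha : associative op)
  (Hlwc : left_weakly_cancellative op) (Hnoid : forall e, ~ idempotent op e)
  (x : nat -> T) (L : list T) m : exists d, ~ In (blk op x m d) L.
Proof.
  apply NNPP; intro Hn.
  assert (HL : forall d, In (blk op x m d) L).
  { intros d. apply NNPP; intro; apply Hn; eauto. }
  destruct (pigeon _ _ HL) as [i [j [Hij Heq]]].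
  unfold blk in Heq. rewrite (seq_split m i j Hij) in Heq.
  set (p := fsum op x (seq m (Datatypes.S i))) in *.
  set (w := fsum op x (seq (m + Datatypes.S i) (j - i))) in *.
  rewrite fsum_app in Heq; auto; try (simpl; congruence).
  2:{ destruct (j - i) eqn:E; [lia|simpl; congruence]. }
  fold p w in Heq.
  assert (Hp : forall n, op p (pw op w n) = p).
  { induction n; simpl; auto. rewrite Ha, IHn; auto. }
  destruct (Hlwc p p) as [L' HL'].
  apply (no_idem_cyclic op Ha Hnoid w L'). intros n; apply HL'; auto.
Qed.

Lemma good_exists {T : Type} (op : T -> T -> T) (Ha : associative op)
  (Hlwc : left_weakly_cancellative op) (Hnoid : forall e, ~ idempotent op e)
  (x : nat -> T) (V : list T) m : exists d, good op V (blk op x m d).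
Proof.
  assert (Hf : finite_pred (fun z => In z V \/
                 exists a, In a V /\ exists b, In b V /\ op a z = b)).
  { apply finite_or.
    - exists V; auto.
    - apply finite_ex. intros a. 
      destruct (finite_ex (fun b z => op a z = b) V (fun b => Hlwc a b)) as [L HL].
      exists L. intros s [b [Hb Hs]]. apply HL; eauto. }
  destruct Hf as [L HL].
  destruct (avoid op Ha Hlwc Hnoid x L m) as [d Hd].
  exists d. split.
  - intro H; apply Hd, HL; auto.
  - intros a b HaV HbV He; apply Hd, HL; right; eauto.
Qed.

Fixpoint st {T : Type} (op : T -> T -> T) (x : nat -> T) (ch : list T -> nat -> nat) (k : nat)
  : list T * nat :=
  match k with
  | 0 => ([], 0)
  | Datatypes.S k' =>
      let '(V, m) := st op x ch k' in
      let yk := blk op x m (ch V m) in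
      (V ++ yk :: map (fun a => op a yk) V, m + Datatypes.S (ch V m))
  end.

Definition yy {T : Type} op x ch k : T :=
  blk op x (snd (st op x ch k)) (ch (fst (st op x ch k)) (snd (st op x ch k))).

Lemma st_S {T : Type} (op : T -> T -> T) x ch k :
  st op x ch (Datatypes.S k) =
  (fst (st op x ch k) ++ yy op x ch k :: map (fun a => op a (yy op x ch k)) (fst (st op x ch k)),
   snd (st op x ch k) + Datatypes.S (ch (fst (st op x ch k)) (snd (st op x ch k)))).
Proof. unfold yy; simpl. destruct (st op x ch k); reflexivity. Qed.

Lemma sorted_app_inv (l : list nat) (a : nat) :
  Sorted lt (l ++ [a]) -> Sorted lt l /\ (l <> [] -> last l 0 < a).
Proof.
  induction l as [|b l IH]; intros Hs.
  - split; [constructor | congruence].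
  - simpl in Hs. inversion Hs as [|? ? Hs' Hhd]; subst.
    destruct (IH Hs') as [IH1 IH2]. split.
    + constructor; auto. destruct l as [|c l]; constructor.
      simpl in Hhd. inversion Hhd; auto.
    + intros _. destruct l as [|c l].
      * simpl in *. inversion Hhd; auto.
      * simpl last. apply IH2; congruence.
Qed.

Lemma sorted_seq m n : Sorted lt (seq m n).
Proof.
  revert m; induction n; intros m; simpl; constructor; auto.
  destruct n; simpl; constructor; lia.
Qed.

Lemma maxP_seq m d : maxP (seq m (Datatypes.S d)) = m + d.
Proof. unfold maxP. rewrite seq_S. apply last_last. Qed.

Theorem lemma2p3 (S : Type) (op : S -> S -> S)
  (Hassoc : associative op)
  (Hinf : infinite_type S)
  (Hlwc : left_weakly_cancellative op)
  (Hnoid : forall e : S, ~ idempotent op e)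
  (x : nat -> S) :
  exists y : nat -> S, sum_subsystem op y x /\ finiteness_of_finite_sums op y.
Proof.
  assert (Hc : exists ch : list S -> nat -> nat, forall V m, good op V (blk op x m (ch V m))).
  { exists (fun V m => proj1_sig (constructive_indefinite_description _
                         (good_exists op Hassoc Hlwc Hnoid x V m))).
    intros V m. exact (proj2_sig (constructive_indefinite_description (fun d => good op V (blk op x m d))
                         (good_exists op Hassoc Hlwc Hnoid x V m))). }
  destruct Hc as [ch Hch].
  set (y := yy op x ch).
  assert (Hgood : forall k, good op (fst (st op x ch k)) (y k)) by (intros; apply Hch).
  assert (Hcov : forall k H, Pf H -> maxP H < k -> In (fsum op y H) (fst (st op x ch k))).
  { induction k as [|k IH]; intros H HP Hm; [lia|].
    rewrite st_S; simpl fst. fold y.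
    destruct (Nat.eq_dec (maxP H) k) as [E|E].
    2:{ apply in_or_app; left; apply IH; auto; lia. }
    destruct HP as [Hne Hso].
    destruct (exists_last Hne) as [l [a Hl]]. subst H.
    unfold maxP in E; rewrite last_last in E; subst a.
    apply sorted_app_inv in Hso as [Hso Hlt].
    apply in_or_app; right.
    destruct l as [|b l].
    - left; reflexivity.
    - right. rewrite fsum_app by (auto; congruence).
      apply in_map_iff. exists (fsum op y (b :: l)); split; [reflexivity|].
      apply IH; [split; [congruence|auto] | apply Hlt; congruence]. }
  exists y. split.
  - exists (fun n => seq (snd (st op x ch n)) (Datatypes.S (ch (fst (st op x ch n)) (snd (st op x ch n))))).
    split; [|split].
    + intros n; split; [simpl; congruence | apply sorted_seq].
    + intros n. rewrite maxP_seq. rewrite (st_S op x ch n). simpl snd.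
      unfold minP. simpl. lia.
    + intros n; reflexivity.
  - assert (Hw : forall H1 H2, Pf H1 -> Pf H2 -> maxP H1 < maxP H2 ->
                 fsum op y H1 <> fsum op y H2).
    { intros H1 H2 HP1 HP2 Hlt.
      set (k := maxP H2) in *.
      pose proof (Hcov k H1 HP1 Hlt) as Hin1.
      destruct HP2 as [Hne Hso].
      destruct (exists_last Hne) as [l [a Hl]].
      assert (Ea : a = k) by (unfold k; rewrite Hl; unfold maxP; symmetry; apply last_last).
      rewrite Hl in Hso. apply sorted_app_inv in Hso as [Hso Hlt'].
      rewrite Hl. subst a.
      destruct (Hgood k) as [G1 G2].
      destruct l as [|b l].
      - simpl. intro E; apply G1; rewrite <- E; auto.
      - rewrite fsum_app by (auto; congruence). simpl (fsum op y [k]).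
        intro E. apply (G2 (fsum op y (b :: l)) (fsum op y H1)); auto.
        apply Hcov; [split; [congruence|auto] | apply Hlt'; congruence]. }
    intros H1 H2 HP1 HP2 Hne.
    destruct (Nat.lt_gt_cases (maxP H1) (maxP H2)) as [[Hl|Hl] _]; auto.
    + intro E; apply (Hw H2 H1); auto.
Qed.
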